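(* Let $P$ be a finite poset, let $\overline{P}$ be its dual poset, and let $J(P)$ be the distributive lattice of lower ideals of $P$ ordered by inclusion, with the height function $\operatorname{rk}(I)=\#I$. Then $$\mathsf{Z}_{J(P),\operatorname{rk}}(1+qx)=\mathsf{L}_{\overline{P}}(x).$$
   Context: $q$ is an indeterminate; $[n]_q=(q^n-1)/(q-1)$ for $n\in\mathbb{Z}$. For a finite poset $R$ with height function $h:R\to\mathbb{N}$ (i.e. $h(x)<h(y)$ whenever $y$ covers $x$), the $q$-Zeta polynomial $\mathsf{Z}_{R,h}\in\mathbb{Q}(q)[x]$ is the unique polynomial such that $\mathsf{Z}_{R,h}([n]_q)=\sum_{e_1\le\cdots\le e_{n-1}\text{ in }R}q^{h(e_1)+\cdots+h(e_{n-1})}$ for all integers $n\ge2$ (such a polynomial exists; explicitly it is $\sum_{k\ge1}\sum_{c_1<\cdots<c_k}q^{\sum h(c_i)}\mathsf{E}_{(h(c_1),\dots,h(c_k))}((x-[k+1]_q)/q^{k+1})$, where $\mathsf{E}_a$ is the unique polynomial with $\mathsf{E}_a([n]_q)=\sum_{m\in\mathbb{N}^k,\sum m_i=n}q^{\sum a_im_i}$ for $n\ge0$). For a finite poset $R$, its order polytope is $Q_R=\{z\in\mathbb{R}^R:0\le z_p\le1\text{ for all }p,\ z_p\le z_{p'}\text{ whenever }p\le p'\}$, and its $q$-order polynomial $\mathsf{L}_R\in\mathbb{Q}(q)[x]$ is the unique polynomial with $\mathsf{L}_R([n]_q)=\sum_{z\in nQ_R\cap\mathbb{Z}^R}q^{\sum_{p}z_p}$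 for all $n\ge0$. *)

(* Defs.v *)
From HB Require Import structures.
From mathcomp Require Import all_boot all_order all_algebra.
Set Implicit Arguments. Unset Strict Implicit. Unset Printing Implicit Defensive.
Import Order.TTheory GRing.Theory.
Local Open Scope ring_scope.

Definition Qq : fieldType := {fraction {poly rat}}.
Definition qq : Qq := FracField.tofrac ('X : {poly rat}).

Definition qint (n : nat) : Qq := (qq ^+ n - 1) / (qq - 1).

Definition is_qZeta (T : finType) (le : rel T) (h : T -> nat) (Z : {poly Qq}) :=
  forall n : nat, (2 <= n)%N ->
    Z.[qint n] = \sum_(e : (n.-1).-tuple T | sorted le e) qq ^+ (\sum_(x <- e) h x).

(* L is the q-order polynomial of the finite poset (T, le):
   L([n]_q) = sum over lattice points z of n Q_T (i.e. order-preserving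
   z : T -> {0,...,n}) of q^(sum_p z_p), for all n >= 0. *)
Definition is_qOrder (T : finType) (le : rel T) (L : {poly Qq}) :=
  forall n : nat,
    L.[qint n] = \sum_(z : {ffun T -> 'I_n.+1} |
                        [forall p, forall p', le p p' ==> (z p <= z p')%N])
                   qq ^+ (\sum_p (z p : nat)).

Definition is_lower_ideal (d : Order.disp_t) (P : finPOrderType d) (I : {set P}) : bool :=
  [forall x, forall y, (x \in I) && (y <= x)%O ==> (y \in I)].

Definition JP (d : Order.disp_t) (P : finPOrderType d) : finType :=
  {I : {set P} | is_lower_ideal I}.

Definition JP_le (d : Order.disp_t) (P : finPOrderType d) : rel (JP P) :=
  fun I J => (val I \subset val J).

Definition JP_rk (d : Order.disp_t) (P : finPOrderType d) (I : JP P) : nat := #|val I|.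

(* Main.v *)
Require Import Defs.
From HB Require Import structures.
From mathcomp Require Import all_boot all_order all_algebra.
From mathcomp Require Import ring zify.
Import Order.TTheory GRing.Theory.
Local Open Scope ring_scope.

Lemma gen1 (F : fieldType) (x y : F) : x - 1 != 0 -> (x * y - 1) / (x - 1) = 1 + x * ((y - 1) / (x - 1)).
Proof. move=> h; by field. Qed.
Lemma gen2 (F : fieldType) (x y : F) : x - 1 != 0 -> y = 1 + (x - 1) * ((y - 1) / (x - 1)).
Proof. move=> h; by field. Qed.
Lemma gen3 (F : fieldType) (u v w y z : F) : v - w != 0 ->
  w * (u / (v - w) * y) + u * y = u / (v - w) * (v * y).
Proof. move=> h; by field. Qed.

Lemma qqX_inj (i j : nat) : qq ^+ i = qq ^+ j -> i = j.
Proof.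
rewrite /qq -!tofracXn => /eqP; rewrite tofrac_eq => /eqP H.
by have := congr1 (fun p : {poly rat} => size p) H; rewrite /= !size_polyXn => -[].
Qed.

Lemma qqX_subn0 (i j : nat) : i <> j -> qq ^+ i - qq ^+ j != 0.
Proof. by move=> ne; rewrite subr_eq0; apply/eqP => /qqX_inj. Qed.

Lemma qq1_neq0 : qq - 1 != 0.
Proof. by have := @qqX_subn0 1 0; rewrite expr1 expr0; apply. Qed.

Lemma qq_neq0 : qq != 0.
Proof.
apply/eqP => H; have := @qqX_subn0 1 2; rewrite expr1 expr2 H mul0r subrr eqxx.
by move=> /(_ ltac:(by [])) .
Qed.

Lemma qint_inj (i j : nat) : qint i = qint j -> i = j.
Proof.
rewrite /qint => H; apply: qqX_inj.
have h := qq1_neq0.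
have : (qq ^+ i - 1) = (qq ^+ j - 1).
  by rewrite -[LHS](divfK h) -[RHS](divfK h) H.
by move/eqP; rewrite (inj_eq (addIr _)) => /eqP.
Qed.

Lemma qintS (n : nat) : qint n.+1 = 1 + qq * qint n.
Proof.
by rewrite /qint exprS gen1 // qq1_neq0.
Qed.

Lemma qqXE (n : nat) : qq ^+ n = 1 + (qq - 1) * qint n.
Proof.
by rewrite /qint -gen2 // qq1_neq0.
Qed.

Lemma solve (N a : nat) (f b : nat -> Qq) :
  (a < N)%N -> (forall j, (j <= a)%N -> b j = 0) ->
  (forall n, f n.+1 = qq ^+ a * f n + \sum_(j < N) b j * qq ^+ (j * n)) ->
  exists c : nat -> Qq, (forall j, (j < a)%N -> c j = 0) /\
     forall n, f n = \sum_(j < N) c j * qq ^+ (j * n).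
Proof.
move=> aN b0 rec.
pose d j := b j / (qq ^+ j - qq ^+ a).
pose K := f 0%N - \sum_(j < N) d j.
have E : forall n, f n = \sum_(j < N) d j * qq ^+ (j * n) + K * qq ^+ (a * n).
  elim=> [|n IH].
    by rewrite /K; under eq_bigr do rewrite muln0 expr0 mulr1;
      rewrite muln0 expr0 mulr1 addrC subrK.
  rewrite rec IH mulrDr addrAC; congr (_ + _); last first.
    by rewrite mulrCA -exprD mulnS addnC.
  rewrite mulr_sumr -big_split /=; apply: eq_bigr => j _.
  have [ja|ja] := eqVneq (val j) a.
    by rewrite /d ja b0 // !mul0r mulr0 add0r.
  have hn := @qqX_subn0 (val j) a (elimN eqP ja).
  rewrite /d mulnS exprD.
  exact: gen3.
exists (fun j : nat => d j + (if j == a then K else 0)); split.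
  move=> j ja; rewrite /d b0 ?(ltnW ja) // mul0r add0r.
  by rewrite (ltn_eqF ja).
move=> n; rewrite E.
have -> : \sum_(j < N) (d j + (if val j == a then K else 0)) * qq ^+ (j * n) =
  \sum_(j < N) (d j * qq ^+ (j * n) + (if val j == a then K else 0) * qq ^+ (j * n)).
  by apply: eq_bigr => j _; rewrite mulrDl.
rewrite big_split /=.
congr (_ + _).
rewrite (bigD1 (Ordinal aN)) //= eqxx big1 ?addr0 // => j /negPf.
by rewrite -(inj_eq val_inj) /= => ->; rewrite mul0r.
Qed.

Lemma big_tuple_cons (T : finType) n (F : n.+1.-tuple T -> Qq) :
  \sum_(t : n.+1.-tuple T) F t = \sum_(x : T) \sum_(t : n.-tuple T) F (cons_tuple x t).
Proof.
rewrite pair_big /=.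
rewrite (reindex (fun p : T * n.-tuple T => cons_tuple p.1 p.2)) //=.
exists (fun t : n.+1.-tuple T => (thead t, behead_tuple t)).
  by move=> [x t] _ /=; congr (_, _); apply: val_inj.
by move=> t _ /=; apply: val_inj => /=; rewrite [in RHS](tuple_eta t).
Qed.

Section Comb.
Variables (d : Order.disp_t) (P : finPOrderType d).
Local Notation X := (JP P).
Local Notation le := (@JP_le d P).
Local Notation rk := (@JP_rk d P).

Definition M (I : X) (n : nat) : Qq :=
  \sum_(t : n.-tuple X | path le I t) qq ^+ (\sum_(x <- t) rk x).

Lemma M_rec I n : M I n.+1 = \sum_(J | le I J) qq ^+ (rk J) * M J n.
Proof.
rewrite /M big_mkcond big_tuple_cons [RHS]big_mkcond /=; apply: eq_bigr => J _.
case: (boolP (le I J)) => HIJ.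
  rewrite mulr_sumr [RHS]big_mkcond /=; apply: eq_bigr => t _.
  by case: ifP => // _; rewrite big_cons exprD.
by apply: big1 => t _.
Qed.

Lemma rk_le I : (rk I <= #|P|)%N.
Proof. exact: max_card. Qed.

Lemma rk_lt I J : le I J -> J != I -> (rk I < rk J)%N.
Proof.
move=> HIJ nJI; apply: proper_card; rewrite properEneq; apply/andP; split; last exact: HIJ.
by rewrite eq_sym; move: nJI; apply: contra => /eqP H; apply/eqP/val_inj.
Qed.

Lemma M_poly_aux k : forall I, (#|P| - rk I < k)%N ->
  exists c : nat -> Qq, (forall j, (j < rk I)%N -> c j = 0) /\
     forall n, M I n = \sum_(j < #|P|.+1) c j * qq ^+ (j * n).
Proof.
elim: k => [//|k IH] I Hk.
have : forall J : X, exists c : nat -> Qq, (le I J && (J != I)) ->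
   (forall j, (j < rk J)%N -> c j = 0) /\
     forall n, M J n = \sum_(j < #|P|.+1) c j * qq ^+ (j * n).
  move=> J; case: (boolP (le I J && (J != I))) => [/andP[h1 h2]|_]; last by exists (fun=> 0).
  have [c Hc] : exists c : nat -> Qq, (forall j, (j < rk J)%N -> c j = 0) /\
     forall n, M J n = \sum_(j < #|P|.+1) c j * qq ^+ (j * n).
    apply: IH; have := rk_lt _ _ h1 h2; have := rk_le J; have := rk_le I; lia.
  by exists c.
case/fin_all_exists => cJ HcJ.
apply: (@solve _ _ (M I) (fun j => \sum_(J | le I J && (J != I)) qq ^+ rk J * cJ J j)).
- by rewrite ltnS rk_le.
- move=> j hj; apply: big1 => J HJ; have [H0 _] := HcJ J HJ.
  case/andP: HJ => h1 h2; rewrite H0 ?mulr0 //.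
  by apply: leq_ltn_trans hj (rk_lt _ _ h1 h2).
- move=> n; rewrite M_rec (bigD1 I) /=; last by rewrite /JP_le subxx.
  congr (_ + _).
  under eq_bigr => J HJ do rewrite (proj2 (HcJ J HJ)) mulr_sumr.
  rewrite exchange_big /=; apply: eq_bigr => j _; rewrite mulr_suml.
  by apply: eq_bigr => J _; rewrite mulrA.
Qed.

Lemma M_poly I : exists c : nat -> Qq, (forall j, (j < rk I)%N -> c j = 0) /\
     forall n, M I n = \sum_(j < #|P|.+1) c j * qq ^+ (j * n).
Proof. by apply: (@M_poly_aux (#|P| - rk I).+1). Qed.

End Comb.

Lemma count_sum (T : Type) (a : pred T) (s : seq T) :
  count a s = (\sum_(x <- s) (a x : nat))%N.
Proof. by elim: s => [|x s IH]; rewrite ?big_nil ?big_cons //= IH. Qed.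

Lemma count_iota_ge (m s n : nat) :
  count (fun i => m <= i)%N (iota s n) = (n - (m - s))%N.
Proof.
elim: n s => [|n IH] s //=; rewrite IH.
case: (leqP m s) => h /=; lia.
Qed.

Lemma count_iota_le (n k : nat) : (k <= n)%N ->
  count (fun i => n - i <= k)%N (iota 0 n) = k.
Proof.
move=> kn; rewrite (eq_count (a2 := fun i => n - k <= i)%N).
  by rewrite count_iota_ge; lia.
by move=> i /=; apply/idP/idP; lia.
Qed.

Lemma bool_sorted_count (b : seq bool) (i : nat) :
  sorted (fun x y : bool => x ==> y) b -> (i < size b)%N ->
  (size b - i <= count id b)%N = nth false b i.
Proof.
elim: b i => [|x b IH] i //= Hs Hi.
case: x Hs => Hs.
  have Ha : all id b.
    have := order_path_min _ Hs; rewrite /= => /(_ ltac:(by move=> [] [] [])).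
    by apply: sub_all => y.
  have Hc : count id b = size b by apply/eqP; rewrite -all_count.
  rewrite Hc.
  have -> : ((size b).+1 - i <= 1 + size b)%N by lia.
  case: i Hi => [|i] //= Hi.
  by apply/esym; apply: (all_nthP false Ha).
case: i Hi => [|i] /= Hi.
  by rewrite add0n ltnNge count_size.
by rewrite add0n subSS IH // (path_sorted Hs).
Qed.
Set Implicit Arguments. Unset Strict Implicit.

Section Bij.
Variables (d : Order.disp_t) (P : finPOrderType d).
Local Notation X := (JP P).
Local Notation le := (@JP_le d P).
Local Notation rk := (@JP_rk d P).

Lemma bot_ideal : is_lower_ideal (set0 : {set P}).
Proof. by apply/forallP => x; apply/forallP => y; rewrite inE. Qed.

Definition bot : X := exist _ set0 bot_ideal.

Lemma path_bot (s : seq X) : path le bot s = sorted le s.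
Proof. by case: s => [|x s] //=; rewrite /JP_le sub0set. Qed.

Definition mono n (z : {ffun P^d -> 'I_n.+1}) : bool :=
  [forall p, forall p', (<=%O : rel P^d) p p' ==> (z p <= z p')%N].

Definition zof n (t : n.-tuple X) : {ffun P^d -> 'I_n.+1} :=
  [ffun p : P^d => inord (count (fun I : X => (p : P) \in val I) t)].

Definition Fz n (z : {ffun P^d -> 'I_n.+1}) (i : nat) : X :=
  insubd bot [set p : P | (n - i <= z p)%N].

Lemma tof_subproof n z : size (map (@Fz n z) (iota 0 n)) == n.
Proof. by rewrite size_map size_iota. Qed.

Definition tof n z : n.-tuple X := Tuple (@tof_subproof n z).

Lemma zofE n (t : n.-tuple X) p :
  (zof t p : nat) = count (fun I : X => (p : P) \in val I) t.
Proof.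
by rewrite ffunE inordK // ltnS -{2}(size_tuple t) count_size.
Qed.

Lemma mono_zof n (t : n.-tuple X) : mono (zof t).
Proof.
apply/forallP => p; apply/forallP => p'; apply/implyP; rewrite /= leEdual => hp.
rewrite !zofE; apply: sub_count => I /= hI.
have := valP I; move=> /forallP /(_ p) /forallP /(_ p') /implyP; apply.
by rewrite hI hp.
Qed.

Lemma Fz_ideal n (z : {ffun P^d -> 'I_n.+1}) i : mono z -> is_lower_ideal [set p : P | (n - i <= z p)%N].
Proof.
move=> hz; apply/forallP => x; apply/forallP => y; apply/implyP.
rewrite !inE => /andP [hx hyx].
move: hz => /forallP /(_ x) /forallP /(_ y) /implyP.
rewrite /= leEdual => /(_ hyx) h; exact: leq_trans hx h.
Qed.

Lemma FzE n (z : {ffun P^d -> 'I_n.+1}) i : mono z -> val (@Fz n z i) = [set p : P | (n - i <= z p)%N].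
Proof. by move=> hz; rewrite /Fz insubdK //; apply: Fz_ideal. Qed.

Lemma zof_tof n (z : {ffun P^d -> 'I_n.+1}) : mono z -> zof (@tof n z) = z.
Proof.
move=> hz; apply/ffunP => p; apply: ord_inj; rewrite zofE /= count_map.
rewrite (eq_count (a2 := fun i => n - i <= z p)%N); last first.
  by move=> i /=; rewrite FzE // inE.
by rewrite count_iota_le // -ltnS.
Qed.

Lemma sorted_tof n (z : {ffun P^d -> 'I_n.+1}) : mono z -> sorted le (@tof n z).
Proof.
move=> hz; rewrite /=; apply: (homo_sorted (e := ltn)); last exact: iota_ltn_sorted.
move=> i j hij; rewrite /JP_le !FzE //; apply/subsetP => p; rewrite !inE => h.
by apply: leq_trans h; lia.
Qed.

Lemma tof_zof n (t : n.-tuple X) : sorted le t -> tof (zof t) = t.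
Proof.
move=> hs; apply: val_inj => /=.
apply: (@eq_from_nth _ bot); first by rewrite size_map size_iota size_tuple.
move=> i; rewrite size_map size_iota => hi.
rewrite (nth_map 0%N) ?size_iota // nth_iota // add0n.
apply: val_inj; rewrite FzE ?mono_zof //; apply/setP => p; rewrite inE zofE.
have := @bool_sorted_count (map (fun I : X => (p : P) \in val I) t) i.
rewrite size_map size_tuple count_map (nth_map bot) ?size_tuple // => -> //.
apply: (homo_sorted (e := le)) => // I J /subsetP hIJ; apply/implyP; exact: hIJ.
Qed.

Lemma weight_zof n (t : n.-tuple X) :
  (\sum_(p : P^d) (zof t p : nat))%N = (\sum_(x <- t) rk x)%N.
Proof.
transitivity (\sum_(p : P^d) \sum_(I <- t) (((p : P) \in val I) : nat))%N.
  by apply: eq_bigr => p _; rewrite zofE count_sum.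
rewrite exchange_big /=; apply: eq_bigr => I _.
rewrite /JP_rk -sum1_card big_mkcond /=.
have E : forall p : P, ((p \in sval I) : nat) = (if p \in sval I then 1 else 0)%N.
  by move=> p; case: (_ \in _).
rewrite (reindex (fun p : P => (p : P^d))) /=; last by exists id.
by rewrite [RHS]big_mkcond; apply: eq_bigr => p _; case: (_ \in _).
Qed.

Lemma Osum_M n :
  \sum_(z : {ffun P^d -> 'I_n.+1} |
       [forall p, forall p', (<=%O : rel P^d) p p' ==> (z p <= z p')%N])
     qq ^+ (\sum_p (z p : nat)) = @M d P bot n.
Proof.
rewrite (reindex_onto (@zof n) (@tof n)); last by move=> z hz; apply: zof_tof.
rewrite /M; apply: eq_big => [t|t _]; last by rewrite weight_zof.
rewrite (_ : [forall p, forall p', _] = true); last exact: (mono_zof t). rewrite /= path_bot; apply/eqP/idP => [<-|hs].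
  exact: sorted_tof (mono_zof t).
exact: tof_zof.
Qed.

End Bij.

Unset Implicit Arguments. Set Strict Implicit.

Theorem mainTheorem3 (d : Order.disp_t) (P : finPOrderType d) :
  (exists Z : {poly Qq}, is_qZeta (@JP_le d P) (@JP_rk d P) Z) /\
  (exists L : {poly Qq}, is_qOrder (<=%O : rel P^d) L) /\
  (forall Z L : {poly Qq},
     is_qZeta (@JP_le d P) (@JP_rk d P) Z ->
     is_qOrder (<=%O : rel P^d) L ->
     Z \Po (1 + qq *: 'X) = L).
Proof.
have Zsum : forall m, \sum_(e : m.-tuple (JP P) | sorted (@JP_le d P) e)
    qq ^+ (\sum_(x <- e) @JP_rk d P x) = @M d P (bot P) m.
  by move=> m; rewrite /M; apply: eq_bigl => t; rewrite path_bot.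
have Osum := @Osum_M d P.
have [c [_ Hc]] := @M_poly d P (bot P).
pose py := \poly_(j < #|P|.+1) c j.
have Hpy : forall n, @M d P (bot P) n = py.[qq ^+ n].
  move=> n; rewrite Hc horner_poly; apply: eq_bigr => j _.
  by rewrite mulnC exprM.
pose L := py \Po (1 + (qq - 1) *: 'X).
have HL : forall n, L.[qint n] = @M d P (bot P) n.
  by move=> n; rewrite horner_comp hornerD hornerC hornerZ hornerX -qqXE Hpy.
split.
  exists (L \Po (qq^-1 *: ('X - 1))) => n hn.
  case: n hn => [|m] // hm; rewrite horner_comp hornerZ hornerD hornerN hornerC hornerX qintS.
  rewrite addrC addKr mulKf ?qq_neq0 // HL /=.
  by rewrite Zsum.
split.
  by exists L => n; rewrite HL Osum.
move=> Z' L' HZ HL'.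
apply/eqP; rewrite -subr_eq0; apply/eqP.
set D := _ - _.
have root_D : forall m, root D (qint m.+1).
  move=> m; rewrite /root /D hornerD hornerN horner_comp hornerD hornerC hornerZ hornerX -qintS.
  rewrite HZ // HL' /= Zsum Osum subrr //.
apply/eqP; apply/negPn/negP => nD.
have H1 : all (root D) [seq qint i.+1 | i <- iota 0 (size D)].
  by apply/allP => x /mapP [i _ ->]; apply: root_D.
have H2 : uniq [seq qint i.+1 | i <- iota 0 (size D)].
  by rewrite map_inj_uniq ?iota_uniq // => i j /qint_inj [].
have := max_poly_roots nD H1 H2.
by rewrite size_map size_iota ltnn.
Qed.
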